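(* In the curved-exam game described in the context, each payoff $U_i(x_i,x_{-i})$ is non-increasing in every opponent's effort $x_j$, $j\ne i$ (negative spillovers). Moreover, the game has at least one pure-strategy Nash equilibrium, and there exist pure Nash equilibria $x^*$ and $y^*$ such that every pure Nash equilibrium $x^e$ satisfies $x^*_i\le x^e_i\le y^*_i$ for all $i=1,\dots,n$.
   Context: The curved-exam game $\Gamma_n$: fix an integer $n\ge 2$, ability parameters $\alpha_1,\dots,\alpha_n\in(0,1)$ and a target mean $m\in(0,1)$. Each student $i\in\{1,\dots,n\}$ chooses $x_i\in[0,1]$; $\bar x=\frac1n\sum_j x_j$, $\bar x_{-i}=\frac1{n-1}\sum_{j\ne i}x_j$. Grade $G_i(x)=x_i+\max(m-\bar x,0)=\max\big(m+\frac{n-1}{n}(x_i-\bar x_{-i}),x_i\big)$ (not truncated at 1); payoff $U_i(x)=G_i(x)^{\alpha_i}(1-x_i)^{1-\alpha_i}$. A pure Nash equilibrium is a profile $x\in[0,1]^n$ such that for every $i$, $U_i(x)\ge U_i(x_i',x_{-i})$ for all $x_i'\in[0,1]$. *)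

(* Defs.v *)
From HB Require Import structures.
From mathcomp Require Import all_boot all_order all_algebra.
From mathcomp Require Import reals exp.
Set Implicit Arguments. Unset Strict Implicit. Unset Printing Implicit Defensive.
Import Order.TTheory GRing.Theory Num.Theory.
Local Open Scope ring_scope.

Section CurvedExam.
Variables (R : realType) (n : nat).

Definition profile := 'I_n -> R.

Definition in01 (x : profile) : Prop := forall j, 0 <= x j <= 1.

Definition xbar (x : profile) : R := (\sum_(j < n) x j) / n%:R.

(* grade G_i(x) = x_i + max(m - xbar, 0)  (not truncated at 1) *)
Definition grade (m : R) (x : profile) (i : 'I_n) : R :=
  x i + Num.max (m - xbar x) 0.

Definition payoff (alpha : 'I_n -> R) (m : R) (x : profile) (i : 'I_n) : R :=
  powR (grade m x i) (alpha i) * powR (1 - x i) (1 - alpha i).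

Definition deviate (x : profile) (i : 'I_n) (y : R) : profile :=
  fun j => if j == i then y else x j.

Definition is_NE (alpha : 'I_n -> R) (m : R) (x : profile) : Prop :=
  in01 x /\
  forall (i : 'I_n) (y : R), 0 <= y <= 1 ->
    payoff alpha m (deviate x i y) i <= payoff alpha m x i.

End CurvedExam.

(* Main.v *)
Require Import Defs.
From HB Require Import structures.
From mathcomp Require Import all_boot all_order all_algebra.
From mathcomp Require Import reals exp.
From mathcomp Require Import classical_sets.
From mathcomp Require Import ring lra.
Import Order.TTheory GRing.Theory Num.Theory.
Local Open Scope ring_scope.


Section Aux1.
Variable R : realType.
Local Notation "a `^ x" := (powR a x).

Lemma ln_lt_sub1 (z : R) : 0 < z -> z != 1 -> ln z < z - 1.
Proof.
move=> z0 z1.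
set s := Num.sqrt z.
have s0 : 0 < s by rewrite sqrtr_gt0.
have zs : z = s ^+ 2 by rewrite sqr_sqrtr // ltW.
have s1 : s != 1 by apply: contraNneq z1 => e; rewrite zs e expr1n.
rewrite zs lnXn // mulr2n.
have h : ln s <= s - 1.
  have e : 1 + (s - 1) = s by ring.
  have := @le_ln1Dx R (s - 1); rewrite e; apply; lra.
have : 0 < (s - 1) ^+ 2 by rewrite exprn_even_gt0 // subr_eq0.
nra.
Qed.
End Aux1.



Section Aux2.
Variable R : realType.
Local Notation "a `^ x" := (powR a x).

Lemma amgm_lt (a x y : R) : 0 < a < 1 -> 0 <= x -> 0 <= y -> x != y ->
  x `^ a * y `^ (1 - a) < a * x + (1 - a) * y.
Proof.
move=> /andP[a0 a1] x0 y0 xy.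
have a0' : a != 0 by rewrite gt_eqF.
have a1' : 1 - a != 0 by rewrite gt_eqF // subr_gt0.
case: (eqVneq x 0) => [ex|nx].
  rewrite ex powR0 // mul0r mulr0 add0r. rewrite mulr_gt0 ?subr_gt0 //.
  by rewrite lt_def y0 andbT; apply/eqP => e; move: xy; rewrite ex e eqxx.
case: (eqVneq y 0) => [ey|ny].
  rewrite ey powR0 // mulr0 mulr0 addr0 mulr_gt0 //.
  by rewrite lt_def x0 andbT.
have xp : 0 < x by rewrite lt_neqAle eq_sym nx.
have yp : 0 < y by rewrite lt_neqAle eq_sym ny.
set M := a * x + (1 - a) * y.
have Mp : 0 < M by rewrite /M; nra.
have xM : x / M != 1.
  apply: contra_neq xy => e.
  have : x = M by move: e; move/(congr1 (fun z => z * M)); rewrite mul1r divfK // gt_eqF.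
  rewrite /M => h; nra.
have yM : y / M != 1.
  apply: contra_neq xy => e.
  have : y = M by move: e; move/(congr1 (fun z => z * M)); rewrite mul1r divfK // gt_eqF.
  rewrite /M => h; nra.
have h1 := @ln_lt_sub1 R _ (divr_gt0 xp Mp) xM.
have h2 := @ln_lt_sub1 R _ (divr_gt0 yp Mp) yM.
rewrite !ln_div ?posrE // in h1 h2.
have hs : x / M * a + y / M * (1 - a) = 1.
  rewrite /M; field; rewrite gt_eqF //.
have key : a * ln x + (1 - a) * ln y < ln M.
  have : a * (ln x - ln M) + (1 - a) * (ln y - ln M) < a * (x / M - 1) + (1 - a) * (y / M - 1).
    apply: ltr_leD; first by rewrite ltr_pM2l.
    by rewrite ler_wpM2l ?subr_ge0 ?ltW.
  have -> : a * (x / M - 1) + (1 - a) * (y / M - 1) = 0.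
    transitivity ((x / M * a + y / M * (1 - a)) - 1); first by ring.
    by rewrite hs subrr.
  lra.
rewrite /powR (gt_eqF xp) (gt_eqF yp) -expRD -[M]lnK ?posrE // ltr_expR.
lra.
Qed.

Lemma amgm_le (a x y : R) : 0 < a < 1 -> 0 <= x -> 0 <= y ->
  x `^ a * y `^ (1 - a) <= a * x + (1 - a) * y.
Proof.
move=> ha x0 y0; case: (eqVneq x y) => [<-|xy]; last by rewrite ltW // amgm_lt.
rewrite -powRD; first by rewrite addrC subrK powRr1 // le_eqVlt; apply/orP; left; apply/eqP; ring.
by rewrite addrC subrK oner_eq0.
Qed.

End Aux2.



Section Aux3.
Variable R : realType.
Local Notation "a `^ x" := (powR a x).

Lemma powR_self (a x : R) : 0 <= x -> x `^ a * x `^ (1 - a) = x.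
Proof.
move=> x0; rewrite -powRD; first by rewrite addrC subrK powRr1.
by rewrite addrC subrK oner_eq0.
Qed.

Lemma opt (a p q ts t : R) : 0 < a < 1 -> 0 < p + q * ts -> 0 < 1 - ts ->
  0 <= p + q * t -> 0 <= 1 - t ->
  (t - ts) * (a * q * (1 - ts) - (1 - a) * (p + q * ts)) <= 0 ->
  (p + q * t) `^ a * (1 - t) `^ (1 - a) <= (p + q * ts) `^ a * (1 - ts) `^ (1 - a)
  /\ (t != ts -> (p + q * t) `^ a * (1 - t) `^ (1 - a) < (p + q * ts) `^ a * (1 - ts) `^ (1 - a)).
Proof.
move=> ha Pp Qp Tp Up hD.
set P := p + q * ts in Pp hD *; set Q := 1 - ts in Qp hD *.
set D := a * q * Q - (1 - a) * P in hD.
set X := (p + q * t) / P; set Y := (1 - t) / Q.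
have X0 : 0 <= X by rewrite divr_ge0 // ltW.
have Y0 : 0 <= Y by rewrite divr_ge0 // ltW.
have eX : p + q * t = P * X by rewrite /X [P * _]mulrC divfK // gt_eqF.
have eY : 1 - t = Q * Y by rewrite /Y [Q * _]mulrC divfK // gt_eqF.
have eS : (a * X + (1 - a) * Y) * (P * Q) = P * Q + (t - ts) * D.
  rewrite /X /Y /D /P /Q; field; rewrite ?gt_eqF //.
have PQ : 0 < P * Q by rewrite mulr_gt0.
have S1 : a * X + (1 - a) * Y <= 1 by nra.
have P0 := ltW Pp; have Q0 := ltW Qp.
clearbody X Y; rewrite eX eY !powRM //.
have -> : P `^ a * X `^ a * (Q `^ (1 - a) * Y `^ (1 - a)) =
   (P `^ a * Q `^ (1 - a)) * (X `^ a * Y `^ (1 - a)) by ring.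
set C := P `^ a * Q `^ (1 - a).
have Cp : 0 < C by rewrite mulr_gt0 // powR_gt0.
have ha' := ha; move/andP: ha' => [a0 a1].
split.
  rewrite -[Z in _ <= Z]mulr1 ler_pM2l //.
  exact: le_trans (@amgm_le _ _ _ _ ha X0 Y0) S1.
move=> tts; rewrite -[Z in _ < Z]mulr1 ltr_pM2l //.
case: (eqVneq X Y) => [eXY|nXY]; last exact: lt_le_trans (@amgm_lt _ _ _ _ ha X0 Y0 nXY) S1.
rewrite eXY powR_self //.
have Y1 : Y != 1.
  apply: contra_neq tts => e; move: eY; rewrite e mulr1 /Q => h; lra.
move: S1; rewrite eXY => S1.
rewrite lt_neqAle Y1 /=; lra.
Qed.

End Aux3.



Section BR.
Variables (R : realType) (n : nat) (a : R).
Hypothesis hn : (2 <= n)%N.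
Hypothesis ha : 0 < a < 1.
Local Notation "a `^ x" := (powR a x).

Definition Uf (c t : R) := (t + Num.max (c - t / n%:R) 0) `^ a * (1 - t) `^ (1 - a).
Definition g1 (t : R) := t `^ a * (1 - t) `^ (1 - a).
Definition kk : R := 1 - (n%:R)^-1.
Definition g2 (c t : R) := (c + kk * t) `^ a * (1 - t) `^ (1 - a).
Definition t2 (c : R) := Num.max 0 (a - (1 - a) * c / kk).
Definition V1 := g1 a.
Definition V2 c := g2 c (t2 c).
Definition BRmax c := if c <= 0 then a else if V2 c <= V1 then a else t2 c.
Definition BRmin c := if c <= 0 then a else if V2 c < V1 then a else t2 c.

Lemma n_gt0 : 0 < (n%:R : R).
Proof. by rewrite ltr0n; case: n hn. Qed.

Lemma n_ge2 : 2 <= (n%:R : R).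
Proof. by rewrite (ler_nat R 2 n). Qed.

Lemma kk_bounds : 0 < kk < 1.
Proof.
have h := n_ge2; have h0 := n_gt0.
rewrite /kk; apply/andP; split.
  rewrite subr_gt0 invf_lt1 //; lra.
rewrite ltrBlDl -subr_gt0 addrK invr_gt0 //.
Qed.

Lemma kk_eq (t : R) : t / n%:R = t - kk * t.
Proof. rewrite /kk; have := n_gt0; move=> h; field; rewrite gt_eqF //. Qed.

Lemma a01 : 0 < a /\ a < 1.
Proof. by case/andP: ha. Qed.

Lemma g1_max (t : R) : 0 <= t <= 1 -> g1 t <= V1 /\ (t != a -> g1 t < V1).
Proof.
move=> /andP[t0 t1].
have [a0 a1] := a01.
have := @opt R a 0 1 a t ha; rewrite !add0r !mul1r; apply => //; try lra.
Qed.

Lemma t2_ge0 (c : R) : 0 <= t2 c.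
Proof. by rewrite /t2 le_max lexx. Qed.

Lemma t2_le_a (c : R) : 0 <= c -> t2 c <= a.
Proof.
move=> c0; have [a0 a1] := a01; have [k0 k1] := andP kk_bounds.
rewrite /t2 ge_max (ltW a0) /=.
have : 0 <= (1 - a) * c / kk by apply: divr_ge0; [apply: mulr_ge0; lra | lra].
lra.
Qed.

Lemma t2_anti (c c' : R) : c <= c' -> t2 c' <= t2 c.
Proof.
move=> cc; have [a0 a1] := a01; have [k0 k1] := andP kk_bounds.
apply: le_max2 => //.
have : (1 - a) * c / kk <= (1 - a) * c' / kk.
  by rewrite ler_pM2r ?invr_gt0 // ler_pM2l // subr_gt0.
lra.
Qed.

Lemma g2_max (c t : R) : 0 < c -> 0 <= t <= 1 -> g2 c t <= V2 c /\ (t != t2 c -> g2 c t < V2 c).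
Proof.
move=> c0 /andP[t0 t1].
have [a0 a1] := a01; have [k0 k1] := andP kk_bounds.
have h0 := t2_ge0 c; have ha' := t2_le_a c (ltW c0).
apply: (@opt R a c kk (t2 c) t ha); try nra.
rewrite /t2; case: (leP (a - (1 - a) * c / kk) 0) => h.
 
  rewrite !subr0 mulr1 mulr0 addr0.
  have : a * kk <= (1 - a) * c.
    move: h; rewrite subr_le0 ler_pdivlMr //; lra.
  nra.

have -> : a * kk * (1 - (a - (1 - a) * c / kk)) - (1 - a) * (c + kk * (a - (1 - a) * c / kk)) = 0.
  by field; rewrite gt_eqF.
by rewrite mulr0.
Qed.


Lemma U_case (c t : R) : 0 <= t ->
  (c - t / n%:R <= 0 /\ Uf c t = g1 t) \/ (0 < c /\ Uf c t = g2 c t).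
Proof.
move=> t0; have h0 := n_gt0.
case: (leP (c - t / n%:R) 0) => h.
  by left; split => //; rewrite /Uf max_r // addr0.
right; split.
  have : 0 <= t / n%:R by rewrite divr_ge0 // ltW.
  lra.
rewrite /Uf /g2 max_l ?(ltW h) //.
by rewrite kk_eq; congr (_ `^ _ * _); ring.
Qed.

Lemma powR_base_le (x y r : R) : 0 <= r -> 0 <= x -> x <= y -> x `^ r <= y `^ r.
Proof.
move=> r0 x0 xy; apply: (ge0_ler_powR r0) => //; rewrite nnegrE //.
exact: le_trans xy.
Qed.

Lemma U_ge_g1 (c t : R) : 0 <= t <= 1 -> g1 t <= Uf c t.
Proof.
move=> /andP[t0 t1]; have [a0 a1] := a01.
rewrite /g1 /Uf ler_wpM2r ?powR_ge0 // powR_base_le ?(ltW a0) //.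
by rewrite lerDl le_max lexx orbT.
Qed.

Lemma U_ge_g2 (c t : R) : 0 < c -> 0 <= t <= 1 -> g2 c t <= Uf c t.
Proof.
move=> c0 /andP[t0 t1]; have [a0 a1] := a01; have [k0 k1] := andP kk_bounds.
rewrite /g2 /Uf ler_wpM2r ?powR_ge0 // powR_base_le ?(ltW a0) //.
  by apply: addr_ge0; [exact: ltW | exact: mulr_ge0 (ltW k0) t0].
have -> : c + kk * t = t + (c - t / n%:R) by rewrite kk_eq; ring.
by rewrite lerD2l le_max lexx.
Qed.

Lemma U_mono (c c' t : R) : c <= c' -> 0 <= t <= 1 -> Uf c t <= Uf c' t.
Proof.
move=> cc /andP[t0 t1]; have [a0 a1] := a01.
rewrite /Uf ler_wpM2r ?powR_ge0 // powR_base_le ?(ltW a0) //.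
  by rewrite addr_ge0 // le_max lexx orbT.
by rewrite lerD2l le_max2 // lerD2r.
Qed.

Lemma V2_mono (c c' : R) : 0 < c -> c <= c' -> V2 c <= V2 c'.
Proof.
move=> c0 cc; have [a0 a1] := a01; have [k0 k1] := andP kk_bounds.
have h0 := t2_ge0 c; have ha' := t2_le_a c (ltW c0).
have c0' : 0 < c' by exact: lt_le_trans cc.
apply: (@le_trans _ _ (g2 c' (t2 c))).
  rewrite /g2 ler_wpM2r ?powR_ge0 // powR_base_le ?(ltW a0) ?lerD2r //.
  by apply: addr_ge0; [exact: ltW | exact: mulr_ge0 (ltW k0) h0].
have ht2 : 0 <= t2 c <= 1 by apply/andP; split; lra.
by case: (g2_max c' (t2 c) c0' ht2).
Qed.

Lemma BR_range (c : R) : (0 <= BRmax c <= 1) /\ (0 <= BRmin c <= 1).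
Proof.
have [a0 a1] := a01.
have hA : 0 <= a <= 1 by apply/andP; split; lra.
rewrite /BRmax /BRmin; case: (leP c 0) => c0 //.
have h0 := t2_ge0 c; have ha' := t2_le_a c (ltW c0).
have hT : 0 <= t2 c <= 1 by apply/andP; split; lra.
by case: ifP; case: ifP.
Qed.

Lemma V1_le_U (c : R) : V1 <= Uf c a.
Proof. have [a0 a1] := a01; apply: U_ge_g1; apply/andP; split; lra. Qed.

Lemma V2_le_U (c : R) : 0 < c -> V2 c <= Uf c (t2 c).
Proof.
move=> c0; have h0 := t2_ge0 c; have ha' := t2_le_a c (ltW c0); have [a0 a1] := a01.
by apply: U_ge_g2 => //; apply/andP; split; lra.
Qed.

Lemma U_le (c t : R) : 0 <= t <= 1 ->
  (c <= 0 /\ Uf c t <= V1) \/ (0 < c /\ (Uf c t <= V1 \/ Uf c t <= V2 c)).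
Proof.
move=> ht; have /andP[t0 t1] := ht.
case: (U_case c t t0) => [[h ->]|[c0 ->]].
  case: (leP c 0) => c0; first by left; split => //; case: (g1_max t ht).
  by right; split => //; left; case: (g1_max t ht).
by right; split => //; right; case: (g2_max c t c0 ht).
Qed.

Lemma BR_opt (c t : R) : 0 <= t <= 1 ->
  Uf c t <= Uf c (BRmax c) /\ Uf c t <= Uf c (BRmin c).
Proof.
move=> ht; have h1 := V1_le_U c.
rewrite /BRmax /BRmin.
case: (U_le c t ht) => [[c0 hu]|[c0 hu]].
  by rewrite c0; split; exact: le_trans hu h1.
rewrite (leNgt c 0) c0 /=.
have h2 := V2_le_U c c0.
case: (leP (V2 c) V1) => hv; case: (ltP (V2 c) V1) => hv' //.
- by split; case: hu => hu; apply: le_trans hu _ => //; exact: le_trans hv h1.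
- have e : V2 c = V1 by apply/eqP; rewrite eq_le hv hv'.
  split; case: hu => hu.
  + exact: le_trans hu h1.
  + by apply: le_trans hu _; rewrite e.
  + by apply: le_trans hu _; rewrite -e.
  + exact: le_trans hu h2.
- by have := lt_trans hv hv'; rewrite ltxx.
- by split; case: hu => hu; apply: le_trans hu _ => //; apply: le_trans h2; exact: ltW.
Qed.

Lemma BR_argmax (c t : R) : 0 <= t <= 1 ->
  (forall t', 0 <= t' <= 1 -> Uf c t' <= Uf c t) -> BRmin c <= t <= BRmax c.
Proof.
move=> ht H; have /andP[t0 t1] := ht; have [a0 a1] := a01.
have hA : 0 <= a <= 1 by apply/andP; split; lra.
have hUa := H a hA; have h1 := V1_le_U c.
rewrite /BRmax /BRmin.
case: (U_case c t t0) => [[h e]|[c0 e]].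
  have ta : t = a.
    apply/eqP; apply/negPn/negP => nta.
    have := proj2 (g1_max t ht) nta; rewrite -e; lra.
  subst t.
  case: (leP c 0) => c0; first by rewrite lexx.
  have hv : V2 c <= V1.
    have h0 := t2_ge0 c; have ha' := t2_le_a c (ltW c0).
    have hT : 0 <= t2 c <= 1 by apply/andP; split; lra.
    have := H _ hT; have := V2_le_U c c0; rewrite e /V1; lra.
  rewrite hv lexx andbT; case: ifP => // _; exact: t2_le_a c (ltW c0).
have hT : 0 <= t2 c <= 1.
  have h0 := t2_ge0 c; have ha' := t2_le_a c (ltW c0).
  by apply/andP; split; lra.
have tt2 : t = t2 c.
  apply/eqP; apply/negPn/negP => nt.
  have := proj2 (g2_max c t c0 ht) nt; have := H _ hT; have := V2_le_U c c0.
  rewrite e; lra.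
subst t.
have hv : V1 <= V2 c by have := g2_max c (t2 c) c0 hT; rewrite -e; lra.
rewrite (leNgt c 0) c0 /= ltNge hv /= lexx /=.
case: ifP => // _; exact: t2_le_a c (ltW c0).
Qed.

Lemma BR_mono (c c' : R) : c <= c' -> BRmax c' <= BRmax c /\ BRmin c' <= BRmin c.
Proof.
move=> cc; have [a0 a1] := a01.
rewrite /BRmax /BRmin.
case: (leP c' 0) => c'0.
  by rewrite (le_trans cc c'0) lexx.
have ht' := t2_le_a c' (ltW c'0).
case: (leP c 0) => c0.
  by split; case: ifP => _ //.
have ht := t2_le_a c (ltW c0).
have hv := V2_mono c c' c0 cc.
have htt := t2_anti c c' cc.
split.
  case: (leP (V2 c') V1) => h.
    by rewrite (le_trans hv h) lexx.
  by case: ifP.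
case: (ltP (V2 c') V1) => h.
  by rewrite (le_lt_trans hv h) lexx.
by case: ifP.
Qed.

End BR.



Section Game.
Variables (R : realType) (n : nat) (alpha : 'I_n -> R) (m : R).
Hypothesis hn : (2 <= n)%N.
Hypothesis halpha : forall i, 0 < alpha i < 1.

Definition sothers (x : profile R n) (i : 'I_n) : R := \sum_(j < n | j != i) x j.
Definition cI (x : profile R n) i := m - sothers x i / n%:R.

Lemma payoffE (x : profile R n) i : payoff alpha m x i = Uf R n (alpha i) (cI x i) (x i).
Proof.
rewrite /payoff /grade /Uf /xbar (bigD1 i) //=.
have h0 := n_gt0 R n hn.
have -> : m - (x i + \sum_(i0 < n | i0 != i) x i0) / n%:R = cI x i - x i / n%:R.
  rewrite /cI /sothers; field; by rewrite gt_eqF.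
done.
Qed.

Lemma sothers_dev (x : profile R n) i y : sothers (deviate x i y) i = sothers x i.
Proof. by apply: eq_bigr => j /negbTE ji; rewrite /deviate ji. Qed.

Lemma dev_self (x : profile R n) i y : deviate x i y i = y.
Proof. by rewrite /deviate eqxx. Qed.

Lemma payoff_dev (x : profile R n) i y :
  payoff alpha m (deviate x i y) i = Uf R n (alpha i) (cI x i) y.
Proof. by rewrite payoffE /cI sothers_dev dev_self. Qed.

Lemma spill (x : profile R n) (i j : 'I_n) (y y' : R) :
  in01 x -> j != i -> 0 <= y -> y <= y' -> y' <= 1 ->
  payoff alpha m (deviate x j y') i <= payoff alpha m (deviate x j y) i.
Proof.
move=> hx ji y0 yy y1.
have ij : (i == j) = false by rewrite eq_sym; exact: negbTE.
rewrite !payoffE /deviate ij.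
apply: (@U_mono R n (alpha i) (halpha i)); last exact: hx.
rewrite /cI lerB // ler_pM2r ?invr_gt0 ?(n_gt0 R n hn) //.
apply: ler_sum => k _; case: (k == j) => //.
Qed.

Definition Fmax (x : profile R n) : profile R n := fun i => BRmax R n (alpha i) (cI x i).
Definition Fmin (x : profile R n) : profile R n := fun i => BRmin R n (alpha i) (cI x i).

Lemma cI_anti (x y : profile R n) i : (forall j, x j <= y j) -> cI y i <= cI x i.
Proof.
move=> xy; rewrite /cI lerB // ler_pM2r ?invr_gt0 ?(n_gt0 R n hn) //.
by apply: ler_sum => k _.
Qed.

Lemma Fmax_mono (x y : profile R n) i : (forall j, x j <= y j) -> Fmax x i <= Fmax y i.
Proof. by move=> xy; case: (@BR_mono R n (alpha i) hn (halpha i) _ _ (cI_anti x y i xy)). Qed.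

Lemma Fmin_mono (x y : profile R n) i : (forall j, x j <= y j) -> Fmin x i <= Fmin y i.
Proof. by move=> xy; case: (@BR_mono R n (alpha i) hn (halpha i) _ _ (cI_anti x y i xy)). Qed.

Lemma Fmax_range (x : profile R n) i : 0 <= Fmax x i <= 1.
Proof. by case: (@BR_range R n (alpha i) hn (halpha i) (cI x i)). Qed.

Lemma Fmin_range (x : profile R n) i : 0 <= Fmin x i <= 1.
Proof. by case: (@BR_range R n (alpha i) hn (halpha i) (cI x i)). Qed.

Lemma NE_of (x : profile R n) : in01 x ->
  (forall i t, 0 <= t <= 1 -> Uf R n (alpha i) (cI x i) t <= Uf R n (alpha i) (cI x i) (x i)) ->
  is_NE alpha m x.
Proof.
move=> hx H; split => // i y hy.
by rewrite payoff_dev payoffE; apply: H.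
Qed.

Lemma NE_fix_max (x : profile R n) : in01 x -> (forall i, x i = Fmax x i) -> is_NE alpha m x.
Proof.
move=> hx hf; apply: NE_of => // i t ht; rewrite hf.
by case: (@BR_opt R n (alpha i) hn (halpha i) (cI x i) t ht).
Qed.

Lemma NE_fix_min (x : profile R n) : in01 x -> (forall i, x i = Fmin x i) -> is_NE alpha m x.
Proof.
move=> hx hf; apply: NE_of => // i t ht; rewrite hf.
by case: (@BR_opt R n (alpha i) hn (halpha i) (cI x i) t ht).
Qed.

Lemma NE_bounds (x : profile R n) : is_NE alpha m x -> forall i, Fmin x i <= x i <= Fmax x i.
Proof.
move=> [hx H] i; apply: (@BR_argmax R n (alpha i) hn (halpha i) (cI x i) (x i)); first exact: hx.
move=> t' ht'; rewrite -payoff_dev -payoffE; exact: H.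
Qed.

Lemma exists_max : exists z : profile R n,
  is_NE alpha m z /\ forall x, is_NE alpha m x -> forall i, x i <= z i.
Proof.
pose P := fun y : profile R n => in01 y /\ forall i, y i <= Fmax y i.
pose E := fun i (r : R) => exists y, P y /\ r = y i.
pose z : profile R n := fun i => sup (E i).
have P0 : P (fun _ => 0).
  split; first by move=> j; rewrite lexx ler01.
  by move=> i; case/andP: (Fmax_range (fun _ => 0) i).
have hs i : has_sup (E i).
  split; first by exists 0; exists (fun _ => 0).
  exists 1 => r [y [[hy _] ->]]; by case/andP: (hy i).
have ub y i : P y -> y i <= z i.
  by move=> Py; apply: (sup_upper_bound (hs i)); exists y.
have zle i : z i <= Fmax z i.
  apply: ge_sup; first exact: (hs i).1.
  move=> r [y [Py ->]]; apply: le_trans (Py.2 i) _.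
  by apply: Fmax_mono => j; apply: ub.
have z01 : in01 z.
  move=> i; apply/andP; split; first exact: ub _ i P0.
  apply: ge_sup; first exact: (hs i).1.
  by move=> r [y [[hy _] ->]]; case/andP: (hy i).
have PF : P (Fmax z).
  split; first by move=> i; exact: Fmax_range.
  by move=> i; apply: Fmax_mono.
have fx i : z i = Fmax z i by apply/eqP; rewrite eq_le zle ub.
exists z; split; first exact: NE_fix_max.
move=> x hx i; apply: ub; split; first exact: hx.1.
by move=> j; case/andP: (NE_bounds x hx j).
Qed.

Lemma exists_min : exists w : profile R n,
  is_NE alpha m w /\ forall x, is_NE alpha m x -> forall i, w i <= x i.
Proof.
pose Q := fun y : profile R n => in01 y /\ forall i, Fmin y i <= y i.
pose E := fun i (r : R) => exists y, Q y /\ r = - y i.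
pose w : profile R n := fun i => - sup (E i).
have Q1 : Q (fun _ => 1).
  split; first by move=> j; rewrite lexx ler01.
  by move=> i; case/andP: (Fmin_range (fun _ => 1) i).
have hs i : has_sup (E i).
  split; first by exists (-1); exists (fun _ => 1).
  exists 0 => r [y [[hy _] ->]]; case/andP: (hy i) => h0 h1; lra.
have lb y i : Q y -> w i <= y i.
  move=> Qy; have : - y i <= sup (E i) by apply: (sup_upper_bound (hs i)); exists y.
  rewrite /w; lra.
have wge i : Fmin w i <= w i.
  suff : sup (E i) <= - Fmin w i by rewrite /w; lra.
  apply: ge_sup; first exact: (hs i).1.
  move=> r [y [Qy ->]].
  have : Fmin w i <= Fmin y i by apply: Fmin_mono => j; apply: lb.
  have := Qy.2 i; lra.
have w01 : in01 w.
  move=> i; apply/andP; split; last exact: lb _ i Q1.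
  suff : sup (E i) <= 0 by rewrite /w; lra.
  apply: ge_sup; first exact: (hs i).1.
  by move=> r [y [[hy _] ->]]; case/andP: (hy i) => h0 h1; lra.
have QF : Q (Fmin w).
  split; first by move=> i; exact: Fmin_range.
  by move=> i; apply: Fmin_mono.
have fx i : w i = Fmin w i by apply/eqP; rewrite eq_le wge lb.
exists w; split; first exact: NE_fix_min.
move=> x hx i; apply: lb; split; first exact: hx.1.
by move=> j; case/andP: (NE_bounds x hx j).
Qed.

End Game.

Theorem mainTheorem2 (R : realType) (n : nat) (hn : (2 <= n)%N)
    (alpha : 'I_n -> R) (m : R)
    (halpha : forall i, 0 < alpha i < 1) (hm : 0 < m < 1) :
  (* negative spillovers: U_i non-increasing in each opponent's effort x_j *)
  (forall (x : profile R n) (i j : 'I_n) (y y' : R),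
      in01 x -> j != i -> 0 <= y -> y <= y' -> y' <= 1 ->
      payoff alpha m (deviate x j y') i <= payoff alpha m (deviate x j y) i)
  /\ (exists x : profile R n, is_NE alpha m x)
  /\ (exists xs ys : profile R n,
        is_NE alpha m xs /\ is_NE alpha m ys /\
        forall xe : profile R n, is_NE alpha m xe ->
          forall i, xs i <= xe i <= ys i).
Proof.
split.
  move=> x i j y y' hx ji y0 yy y1.
  exact: (@spill R n alpha m hn halpha x i j y y' hx ji y0 yy y1).
have [ys [hys Hys]] := @exists_max R n alpha m hn halpha.
have [xs [hxs Hxs]] := @exists_min R n alpha m hn halpha.
split; first by exists ys.
exists xs, ys; split => //; split => // xe he i.
by rewrite Hxs // Hys.
Qed.
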